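(* Let $G$ be a snark and let $e_1$ and $e_2$ be distinct edges of $G$. Let $G(e_1,e_2)$ be the cubic graph obtained from $G$ by subdividing $e_1$ with a new vertex $w_1$, subdividing $e_2$ with a new vertex $w_2$, and adding a new edge $w_1w_2$. Then $G(e_1,e_2)$ is a snark if and only if the graph $G-\{e_1,e_2\}$ (obtained from $G$ by deleting the two edges and keeping all vertices) is not $3$-edge-colourable.
   Context: A snark is a connected cubic graph (loops and parallel edges allowed) which has no proper $3$-edge-colouring. A $3$-edge-colouring of a graph (possibly with vertices of degree less than $3$) is proper if edges sharing an end-vertex receive distinct colours. *)

(* Defs.v *)
From mathcomp Require Import all_boot.
Set Implicit Arguments. Unset Strict Implicit. Unset Printing Implicit Defensive.

(* A finite multigraph: vertex set, edge set, and for each edge its two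
   end-vertices (an unordered pair, stored as an ordered pair; a loop has
   both ends equal). *)
Record mgraph := MGraph {
  vert : finType;
  edge : finType;
  endpts : edge -> vert * vert
}.

Section Defs.
Variable G : mgraph.

(* degree counts half-edges: a loop contributes 2 *)
Definition deg (v : vert G) : nat :=
  \sum_(e : edge G) (((endpts e).1 == v) + ((endpts e).2 == v)).

Definition cubic : Prop := forall v : vert G, deg v = 3.

Definition adj (u v : vert G) : bool :=
  [exists e : edge G, (endpts e == (u, v)) || (endpts e == (v, u))].

Definition connected : Prop := forall u v : vert G, connect adj u v.

Definition is_loop (e : edge G) : bool := (endpts e).1 == (endpts e).2.

Definition share_end (e f : edge G) : bool :=
  [exists v : vert G,
     (((endpts e).1 == v) || ((endpts e).2 == v)) &&
     (((endpts f).1 == v) || ((endpts f).2 == v))].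

(* proper 3-edge-colouring: edges sharing an end-vertex get distinct colours;
   a loop shares its end-vertex with itself (two half-edges at the same
   vertex), so a graph with a loop has no proper edge-colouring. *)
Definition proper3 (c : edge G -> 'I_3) : Prop :=
  (forall e : edge G, ~~ is_loop e) /\
  (forall e f : edge G, e != f -> share_end e f -> c e != c f).

Definition colourable3 : Prop := exists c : edge G -> 'I_3, proper3 c.

Definition snark : Prop := [/\ connected, cubic & ~ colourable3].

End Defs.

Definition delete2 (G : mgraph) (e1 e2 : edge G) : mgraph :=
  @MGraph (vert G) {e : edge G | e \notin [:: e1; e2]}
          (fun e => endpts (val e)).

(* G(e1,e2): subdivide e1 by w1 := inr false, e2 by w2 := inr true,
   and add the edge w1 w2 (the element inr tt).  An old edge e is kept as
   (e, false) unless e is e1 or e2, in which case (e, false) and (e, true)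
   are its two halves. *)
Definition sub_edge (G : mgraph) (e1 e2 : edge G) : finType :=
  ({p : edge G * bool | p.2 ==> (p.1 \in [:: e1; e2])} + unit)%type.

Definition sub_endpts (G : mgraph) (e1 e2 : edge G)
    (x : sub_edge e1 e2) : (vert G + bool) * (vert G + bool) :=
  match x with
  | inr _ => (inr false, inr true)
  | inl p =>
      let e := (val p).1 in
      let b := (val p).2 in
      let a := (endpts e).1 in
      let c := (endpts e).2 in
      if e == e1 then (if b then (inr false, inl c) else (inl a, inr false))
      else if e == e2 then (if b then (inr true, inl c) else (inl a, inr true))
      else (inl a, inl c)
  end.

Definition subdiv2 (G : mgraph) (e1 e2 : edge G) : mgraph :=
  @MGraph (vert G + bool)%type (sub_edge e1 e2) (@sub_endpts G e1 e2).

(* Main.v *)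
Require Import Defs.
From mathcomp Require Import all_boot.
From mathcomp Require Import zify.
Set Implicit Arguments. Unset Strict Implicit. Unset Printing Implicit Defensive.

Definition B3 := (bool * bool * bool)%type.
Definition mem3 (M : B3) (k : nat) : bool :=
  match k with 0 => M.1.1 | 1 => M.1.2 | 2 => M.2 | _ => false end.
Definition card3 (M : B3) : nat := M.1.1 + M.1.2 + M.2.
Definition eqB3 (M N : B3) : bool := [&& M.1.1 == N.1.1, M.1.2 == N.1.2 & M.2 == N.2].
Definition cols := [:: 0; 1; 2].
Definition hypsT (e01 e02 e03 e12 e13 e23 : bool) :=
  [&& (e01 && e12) ==> e02, (e01 && e13) ==> e03, (e02 && e23) ==> e03,
      (e12 && e23) ==> e13, (e01 && e02) ==> e12, (e01 && e03) ==> e13,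
      (e02 && e03) ==> e23, (e12 && e13) ==> e23, (e02 && e12) ==> e01,
      (e03 && e13) ==> e01, (e03 && e23) ==> e02 & (e13 && e23) ==> e12].
Definition hypsM (e01 e02 e03 e12 e13 e23 : bool) (M0 M1 M2 M3 : B3) :=
  [&& e01 ==> eqB3 M0 M1, e02 ==> eqB3 M0 M2, e03 ==> eqB3 M0 M3,
      e12 ==> eqB3 M1 M2, e13 ==> eqB3 M1 M3, e23 ==> eqB3 M2 M3,
      card3 M0 == 1 + e01 + e02 + e03, card3 M1 == e01 + 1 + e12 + e13,
      card3 M2 == e02 + e12 + 1 + e23, card3 M3 == e03 + e13 + e23 + 1 &
   all (fun i => ~~ odd (mem3 M0 i && ~~ [|| e01, e02 | e03]
        + mem3 M1 i && ~~ (e12 || e13) + mem3 M2 i && ~~ e23 + mem3 M3 i)) cols].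
Definition conclA (e01 e02 e03 e12 e13 e23 : bool) (M0 M1 M2 M3 : B3) (a0 a1 a2 a3 z : nat) :=
     [&& mem3 M0 a0, mem3 M1 a1, mem3 M2 a2, mem3 M3 a3, a0 != a1, a2 != a3,
         e02 ==> (a0 != a2), e03 ==> (a0 != a3), e12 ==> (a1 != a2), e13 ==> (a1 != a3),
         z < 3, z != a0, z != a1, z != a2 & z != a3].
Definition conclB (e01 e02 e03 e12 e13 e23 : bool) (M0 M1 M2 M3 : B3) :=
  [&& ~~ e01, ~~ e02, ~~ e03, ~~ e12, ~~ e13, ~~ e23,
        has (fun x => mem3 M0 x && mem3 M1 x) cols & has (fun y => mem3 M2 y && mem3 M3 y) cols].
Definition check1 e01 e02 e03 e12 e13 e23 M0 M1 M2 M3 :=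
  if hypsT e01 e02 e03 e12 e13 e23 then
  if hypsM e01 e02 e03 e12 e13 e23 M0 M1 M2 M3 then
   has (fun a0 => has (fun a1 => has (fun a2 => has (fun a3 => has (fun z =>
     conclA e01 e02 e03 e12 e13 e23 M0 M1 M2 M3 a0 a1 a2 a3 z) cols) cols) cols) cols) cols
   || conclB e01 e02 e03 e12 e13 e23 M0 M1 M2 M3
  else true else true.
Definition bools := [:: false; true].
Definition b3s : seq B3 := [:: (false,false,false); (false,false,true); (false,true,false); (false,true,true); (true,false,false); (true,false,true); (true,true,false); (true,true,true)].
Definition check_all :=
  all (fun e01 => all (fun e02 => all (fun e03 => all (fun e12 => all (fun e13 => all (fun e23 =>
  all (fun M0 => all (fun M1 => all (fun M2 => all (fun M3 =>
    check1 e01 e02 e03 e12 e13 e23 M0 M1 M2 M3) b3s) b3s) b3s) b3s)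
  bools) bools) bools) bools) bools) bools.
Lemma check_allT : check_all.
Proof. vm_compute. reflexivity. Qed.

Lemma abs_lemma e01 e02 e03 e12 e13 e23 M0 M1 M2 M3 :
  hypsT e01 e02 e03 e12 e13 e23 -> hypsM e01 e02 e03 e12 e13 e23 M0 M1 M2 M3 ->
  (exists a0 a1 a2 a3 z, conclA e01 e02 e03 e12 e13 e23 M0 M1 M2 M3 a0 a1 a2 a3 z)
  \/ conclB e01 e02 e03 e12 e13 e23 M0 M1 M2 M3.
Proof.
have HB : forall b : bool, b \in bools by case.
have HM : forall M : B3, M \in b3s by case=> [[[] []] []].
move=> hT hM.
have := check_allT; rewrite /check_all.
move=> /allP/(_ e01 (HB _)) /allP/(_ e02 (HB _)) /allP/(_ e03 (HB _)).
move=> /allP/(_ e12 (HB _)) /allP/(_ e13 (HB _)) /allP/(_ e23 (HB _)).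
move=> /allP/(_ M0 (HM _)) /allP/(_ M1 (HM _)) /allP/(_ M2 (HM _)) /allP/(_ M3 (HM _)).
rewrite /check1 hT hM => /orP[|->]; last by right.
move=> /hasP[a0 _] /hasP[a1 _] /hasP[a2 _] /hasP[a3 _] /hasP[z _] H.
by left; exists a0, a1, a2, a3, z.
Qed.

Fixpoint sumlast (T : eqType) (l : seq T) (F : T -> nat) : nat :=
  if l is x :: l' then (x \notin l') * F x + sumlast l' F else 0.

Lemma sum_sumlast (T : finType) (l : seq T) (F : T -> nat) :
  \sum_u (u \in l) * F u = sumlast l F.
Proof.
elim: l => [|x l IH] /=; first by rewrite big1 // => u _; rewrite in_nil.
case: (boolP (x \in l)) => xl /=.
  rewrite mul0n add0n -IH; apply: eq_bigr => u _; rewrite inE.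
  by case: (u =P x) => [->|] //=; rewrite xl.
rewrite mul1n -IH (bigD1 x) //= inE eqxx /= mul1n [in RHS](bigD1 x) //= (negbTE xl) mul0n add0n.
congr (_ + _); apply: eq_bigr => u nux; by rewrite inE (negbTE nux).
Qed.

Lemma hypsT_eq (T : eqType) (a b c d : T) :
  hypsT (a == b) (a == c) (a == d) (b == c) (b == d) (c == d).
Proof.
rewrite /hypsT; repeat (apply/andP; split);
  apply/implyP => /andP[/eqP E1 /eqP E2]; apply/eqP; congruence.
Qed.

Lemma inord_neq (a b : nat) : a < 3 -> b < 3 -> a != b -> (inord a : 'I_3) != inord b.
Proof.
move=> ha hb; apply: contra => /eqP /(congr1 val) /=.
by rewrite !inordK // => ->.
Qed.

Section Sub.
Variable G : mgraph.
Variables e1 e2 : edge G.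
Hypothesis e12 : e1 != e2.

Definition endsP (p : edge G * bool) : (vert G + bool) * (vert G + bool) :=
      let e := p.1 in
      let b := p.2 in
      let a := (endpts e).1 in
      let c := (endpts e).2 in
      if e == e1 then (if b then (inr false, inl c) else (inl a, inr false))
      else if e == e2 then (if b then (inr true, inl c) else (inl a, inr true))
      else (inl a, inl c).

Definition incS (pr : (vert G + bool) * (vert G + bool)) x : nat := (pr.1 == x) + (pr.2 == x).

Lemma deg_subE (x : vert G + bool) : @deg (subdiv2 e1 e2) x =
  \sum_(e : edge G) (incS (endsP (e,false)) x + (e \in [:: e1; e2]) * incS (endsP (e,true)) x)
  + incS (inr false, inr true) x.
Proof.
rewrite /deg big_sumType /=; congr (_ + _); last first.
  by rewrite (big_pred1 tt) // => -[].
rewrite -(big_sub_cond (fun p : edge G * bool => p.2 ==> (p.1 \in [:: e1; e2])) xpredT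
     (fun p => incS (endsP p) x)) /=.
rewrite big_mkcond /=.
transitivity (\sum_(e : edge G) \sum_(b : bool)
   (if b ==> (e \in [:: e1; e2]) then incS (endsP (e, b)) x else 0)).
  by rewrite pair_bigA; apply: eq_bigr => -[e b] _; rewrite andbT.
apply: eq_bigr => e _.
rewrite big_bool /= addnC; by case: (e \in _); rewrite ?mul1n ?mul0n.
Qed.

Lemma cubic_sub : cubic G -> cubic (subdiv2 e1 e2).
Proof.
move=> cG x; rewrite deg_subE; case: x => [u|[]].
- have -> : incS (inr false, inr true) (inl u) = 0 by [].
  rewrite addn0 -(cG u) /deg; apply: eq_bigr => e _; rewrite /incS.
  rewrite /endsP /=; case: (e =P e1) => [->|n1]; first by rewrite inE eqxx /= !addn0 mul1n add0n.
  case: (e =P e2) => [->|n2]; first by rewrite !inE eqxx orbT /= !addn0 mul1n add0n.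
  have -> : (e \in [:: e1; e2]) = false by rewrite !inE; apply/negP => /orP[] /eqP.
  by rewrite /= mul0n addn0.
- have -> : incS (inr false, inr true) (inr true) = 1 by [].
  have n21 : (e2 == e1) = false by rewrite eq_sym; exact: negbTE.
  rewrite (bigD1 e2) //= big1 => [|e ne2].
    by rewrite /endsP /= n21 eqxx !inE eqxx orbT.
  rewrite /endsP /= (negbTE ne2); case: (e == e1) => /=; first by rewrite !muln0.
  by rewrite muln0.
- have -> : incS (inr false, inr true) (inr false) = 1 by [].
  rewrite (bigD1 e1) //= big1 => [|e ne1].
    by rewrite /endsP /= eqxx !inE eqxx.
  rewrite /endsP /= (negbTE ne1); case: (e == e2) => /=; first by rewrite !muln0.
  by rewrite muln0.
Qed.

Definition sS : sub_edge e1 e2 -> vert G + bool := fun _ => inl (endpts e1).1.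

Lemma adj_symG (H : mgraph) : symmetric (@adj H).
Proof. by move=> x y; rewrite /adj; apply: eq_existsb => s; rewrite orbC. Qed.

Lemma adj_of (s : sub_edge e1 e2) :
  @adj (subdiv2 e1 e2) (sub_endpts s).1 (sub_endpts s).2.
Proof. by apply/existsP; exists s; rewrite -surjective_pairing eqxx. Qed.

Lemma e1_in : true ==> (e1 \in [:: e1; e2]). Proof. by rewrite /= inE eqxx. Qed.
Lemma e2_in : true ==> (e2 \in [:: e1; e2]). Proof. by rewrite /= !inE eqxx orbT. Qed.

Definition hE (e : edge G) : sub_edge e1 e2 := inl (exist _ (e, false) (implyFb _)).
Definition h1t : sub_edge e1 e2 := inl (exist _ (e1, true) e1_in).
Definition h2t : sub_edge e1 e2 := inl (exist _ (e2, true) e2_in).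

Lemma connect_edge (e : edge G) :
  connect (@adj (subdiv2 e1 e2)) (inl (endpts e).1) (inl (endpts e).2).
Proof.
have n21 : (e2 == e1) = false by rewrite eq_sym; exact: negbTE.
case: (e =P e1) => [->|n1].
  apply: (@connect_trans _ _ (inr false)).
    by apply: connect1; have := adj_of (hE e1); rewrite /= eqxx.
  by apply: connect1; have := adj_of h1t; rewrite /= eqxx.
case: (e =P e2) => [->|n2].
  apply: (@connect_trans _ _ (inr true)).
    by apply: connect1; have := adj_of (hE e2); rewrite /= n21 eqxx.
  by apply: connect1; have := adj_of h2t; rewrite /= n21 eqxx.
apply: connect1; have := adj_of (hE e); rewrite /=.
by move/eqP/negbTE: n1 => ->; move/eqP/negbTE: n2 => ->.
Qed.

Lemma lift_adj u v : @adj G u v -> connect (@adj (subdiv2 e1 e2)) (inl u) (inl v).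
Proof.
case/existsP => e /orP[] /eqP He.
  by have := connect_edge e; rewrite He.
have := connect_edge e; rewrite He /=.
by rewrite (sym_connect_sym (@adj_symG (subdiv2 e1 e2))).
Qed.

Lemma lift_connect u v : connect (@adj G) u v -> connect (@adj (subdiv2 e1 e2)) (inl u) (inl v).
Proof.
move/connectP => [p]; elim: p u => [|w p IH] u /=; first by move=> _ ->; exact: connect0.
by move=> /andP[Huw Hp] Hv; apply: connect_trans (lift_adj Huw) (IH w Hp Hv).
Qed.

Lemma connected_sub : connected G -> connected (subdiv2 e1 e2).
Proof.
move=> cG.
have n21 : (e2 == e1) = false by rewrite eq_sym; exact: negbTE.
set u0 := (endpts e1).1.
have H0 : forall x : vert G + bool, connect (@adj (subdiv2 e1 e2)) (inl u0) x.
  case=> [u|[]]; first exact: lift_connect.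
    apply: connect_trans (lift_connect (cG u0 (endpts e2).1)) _.
    by apply: connect1; have := adj_of (hE e2); rewrite /= n21 eqxx.
  by apply: connect1; have := adj_of (hE e1); rewrite /= eqxx.
move=> x y; apply: connect_trans (H0 y).
by rewrite (sym_connect_sym (@adj_symG (subdiv2 e1 e2))).
Qed.

Lemma hE_ends (e : edge G) : e \notin [:: e1; e2] ->
  @endpts (subdiv2 e1 e2) (hE e) = (inl (endpts e).1, inl (endpts e).2).
Proof.
rewrite !inE negb_or => /andP[n1 n2].
by rewrite /= (negbTE n1) (negbTE n2).
Qed.

Lemma col_sub_del : colourable3 (subdiv2 e1 e2) -> colourable3 (delete2 e1 e2).
Proof.
move=> [c [nl pr]]; exists (fun f => c (hE (val f))); split.
  move=> f; have := nl (hE (val f)); rewrite /is_loop hE_ends ?(valP f) //=.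
move=> f g nfg /existsP[v Hv]; apply: pr.
  apply: contra nfg => /eqP H; apply/eqP/val_inj.
  by case: H.
apply/existsP; exists (inl v).
by rewrite !hE_ends ?(valP f) ?(valP g) //=.
Qed.

Hypothesis cG : cubic G.
Variable c : edge (delete2 e1 e2) -> 'I_3.
Hypothesis nlc : forall f, ~~ @is_loop (delete2 e1 e2) f.
Hypothesis prc : forall f g, f != g -> @share_end (delete2 e1 e2) f g -> c f != c g.

Definition D (e : edge G) := e \notin [:: e1; e2].
Definition c' (e : edge G) : 'I_3 :=
  if @insub _ (fun e => e \notin [:: e1; e2]) (edge (delete2 e1 e2)) e is Some f then c f else ord0.

Lemma c'E e (De : D e) : c' e = c (exist _ e De).
Proof. by rewrite /c' insubT. Qed.

Lemma nlD e : D e -> (endpts e).1 != (endpts e).2.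
Proof. by move=> De; have := nlc (exist _ e De). Qed.

Definition inc (e : edge G) (u : vert G) : nat := ((endpts e).1 == u) + ((endpts e).2 == u).

Lemma incP e u : (inc e u != 0) = ((endpts e).1 == u) || ((endpts e).2 == u).
Proof. by rewrite /inc; case: (_ == u); case: (_ == u). Qed.

Lemma inc_le1 e u : D e -> inc e u <= 1.
Proof.
move/nlD; rewrite /inc.
by case: ((endpts e).1 =P u) => [->|]; case: ((endpts e).2 =P u) => [->|] //=; rewrite eqxx.
Qed.

Lemma prD e f u : D e -> D f -> e != f ->
  ((endpts e).1 == u) || ((endpts e).2 == u) ->
  ((endpts f).1 == u) || ((endpts f).2 == u) -> c' e != c' f.
Proof.
move=> De Df nef He Hf; rewrite !c'E; apply: prc.
  by apply: contra nef => /eqP [->].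
by apply/existsP; exists u; rewrite /= He Hf.
Qed.

Definition P u i := \sum_(e | D e) inc e u * (c' e == i).

Lemma miss_ne u i e : P u i == 0 -> D e ->
  ((endpts e).1 == u) || ((endpts e).2 == u) -> c' e != i.
Proof.
rewrite /P sum_nat_eq0 => /forallP/(_ e) H De; move: H; rewrite De /=.
by rewrite -incP muln_eq0 => /orP[/eqP->|]; rewrite ?eqxx //; case: (c' e == i).
Qed.

Lemma P_le1 u i : P u i <= 1.
Proof.
case: (boolP [exists e, D e && (inc e u * (c' e == i) != 0)]) => [/existsP[e0 /andP[D0 N0]]|/existsPn H].
  rewrite /P (bigD1 e0) //= big1 ?addn0.
    by have := inc_le1 u D0; case: (c' e0 == i); rewrite ?muln1 ?muln0.
  move=> e /andP[De nee0]; apply/eqP.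
  case: (boolP (inc e u * (c' e == i) == 0)) => [/eqP//|N]; exfalso.
  move: N N0; rewrite !muln_eq0 !negb_or !incP !eqb0 !negbK => /andP[Ie Ce] /andP[I0 C0].
  by have := prD De D0 nee0 Ie I0; rewrite (eqP Ce) (eqP C0) eqxx.
rewrite /P big1 // => e De; move: (H e); rewrite De /= negbK => /eqP //.
Qed.

Lemma sum_eq1 (T : finType) (x : T) : \sum_(i : T) (x == i : nat) = 1.
Proof. by rewrite (bigD1 x) //= eqxx big1 // => i; rewrite eq_sym => /negbTE ->. Qed.

Lemma sumI3 (F : 'I_3 -> nat) : \sum_i F i = F (inord 0) + F (inord 1) + F (inord 2).
Proof.
rewrite !big_ord_recl big_ord0 addn0 addnA.
by congr (F _ + F _ + F _); apply/val_inj; rewrite /= inordK.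
Qed.

Lemma sumP u : \sum_i P u i = \sum_(e | D e) inc e u.
Proof.
rewrite /P exchange_big /=; apply: eq_bigr => e _.
by rewrite -big_distrr /= sum_eq1 muln1.
Qed.

Lemma degE u : deg u = inc e1 u + inc e2 u + \sum_(e | D e) inc e u.
Proof.
rewrite /deg (bigD1 e1) //= (bigD1 e2) /=; last by rewrite eq_sym.
rewrite addnA; congr (_ + _); apply: eq_bigl => e.
by rewrite /D !inE negb_or.
Qed.

Definition slots u := inc e1 u + inc e2 u.

Lemma sumD u : \sum_(e | D e) inc e u = 3 - slots u.
Proof. by rewrite -(cG u) degE /slots addKn. Qed.

Lemma slots_le3 u : slots u <= 3.
Proof. by rewrite -(cG u) degE leq_addr. Qed.

Lemma cardM u : \sum_(i : 'I_3) (P u i == 0 : nat) = slots u.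
Proof.
have := sumP u; rewrite sumD !sumI3.
have := slots_le3 u.
have h0 := P_le1 u (inord 0); have h1 := P_le1 u (inord 1); have h2 := P_le1 u (inord 2).
move: (P u (inord 0)) (P u (inord 1)) (P u (inord 2)) h0 h1 h2 => x y z.
by case: x => [|[|x]] //; case: y => [|[|y]] //; case: z => [|[|z]] //= _ _ _; lia.
Qed.

Lemma sum_inc e : \sum_u inc e u = 2.
Proof. by rewrite /inc big_split /= !sum_eq1. Qed.

Lemma sumPu i : \sum_u P u i = 2 * \sum_(e | D e) (c' e == i : nat).
Proof.
rewrite /P exchange_big /= big_distrr /=; apply: eq_bigr => e _.
by rewrite -big_distrl /= sum_inc.
Qed.

Lemma Veven : ~~ odd #|vert G|.
Proof.
have H1 : \sum_(u : vert G) deg u = #|vert G| * 3.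
  by rewrite (eq_bigr (fun _ => 3)) ?sum_nat_const // => u _; exact: cG.
have H2 : \sum_(u : vert G) deg u = #|edge G| * 2.
  by rewrite /deg exchange_big /= (eq_bigr (fun _ => 2)) ?sum_nat_const // => e _; exact: sum_inc.
have : odd (#|vert G| * 3) = odd (#|edge G| * 2) by rewrite -H1 -H2.
by rewrite !oddM andbT andbF => ->.
Qed.

Lemma parity i : ~~ odd (\sum_u (P u i == 0 : nat)).
Proof.
have H : \sum_u ((P u i == 0 : nat) + P u i) = #|vert G|.
  rewrite (eq_bigr (fun _ => 1)) ?sum_nat_const ?muln1 // => u _.
  by have := P_le1 u i; case: (P u i) => [|[|]].
move: H; rewrite big_split /= sumPu => H.
have := Veven; rewrite -H oddD oddM /= addbF.
by [].
Qed.


Local Notation p1 := (endpts e1).1.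
Local Notation q1 := (endpts e1).2.
Local Notation p2 := (endpts e2).1.
Local Notation q2 := (endpts e2).2.

Definition colS (A0 A1 A2 A3 Z : 'I_3) (x : sub_edge e1 e2) : 'I_3 :=
  match x with
  | inr _ => Z
  | inl s => let e := (val s).1 in let b := (val s).2 in
     if e == e1 then (if b then A1 else A0) else if e == e2 then (if b then A3 else A2) else c' e
  end.

Variant kind_spec : sub_edge e1 e2 -> Type :=
 | KOld e of D e : kind_spec (hE e)
 | K1f : kind_spec (hE e1) | K1t : kind_spec h1t
 | K2f : kind_spec (hE e2) | K2t : kind_spec h2t | KM : kind_spec (inr tt).

Lemma kindP x : kind_spec x.
Proof.
case: x => [[[e b] Hb]|[]]; last exact: KM.
case: (e =P e1) => [E|n1].
  subst e; case: b Hb => Hb.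
    by rewrite (bool_irrelevance Hb e1_in); exact: K1t.
  by rewrite (bool_irrelevance Hb (implyFb _)); exact: K1f.
case: (e =P e2) => [E|n2].
  subst e; case: b Hb => Hb.
    by rewrite (bool_irrelevance Hb e2_in); exact: K2t.
  by rewrite (bool_irrelevance Hb (implyFb _)); exact: K2f.
have De : D e by rewrite /D !inE negb_or; apply/andP; split; apply/eqP.
case: b Hb => Hb.
  by exfalso; move: Hb; rewrite /= !inE => /orP[] /eqP.
by rewrite (bool_irrelevance Hb (implyFb _)); exact: (KOld De).
Qed.

Lemma n21 : (e2 == e1) = false.
Proof. by rewrite eq_sym; exact: negbTE. Qed.

Lemma ends1f : @endpts (subdiv2 e1 e2) (hE e1) = (inl p1, inr false).
Proof. by rewrite /= eqxx. Qed.
Lemma ends1t : @endpts (subdiv2 e1 e2) h1t = (inr false, inl q1).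
Proof. by rewrite /= eqxx. Qed.
Lemma ends2f : @endpts (subdiv2 e1 e2) (hE e2) = (inl p2, inr true).
Proof. by rewrite /= n21 eqxx. Qed.
Lemma ends2t : @endpts (subdiv2 e1 e2) h2t = (inr true, inl q2).
Proof. by rewrite /= n21 eqxx. Qed.
Lemma endsM : @endpts (subdiv2 e1 e2) (inr tt) = (inr false, inr true).
Proof. by []. Qed.
Lemma endsO e : D e -> @endpts (subdiv2 e1 e2) (hE e) = (inl (endpts e).1, inl (endpts e).2).
Proof. exact: hE_ends. Qed.

Lemma inl_eq (a b : vert G) : (inl a == inl b :> vert G + bool) = (a == b).
Proof. by []. Qed.

Lemma eqS_ll a b : (inl a == inl b :> vert (subdiv2 e1 e2)) = (a == b). Proof. by []. Qed.
Lemma eqS_rl b a : (inr b == inl a :> vert (subdiv2 e1 e2)) = false. Proof. by []. Qed.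
Lemma eqS_lr a b : (inl a == inr b :> vert (subdiv2 e1 e2)) = false. Proof. by []. Qed.
Lemma eqS_rr b b' : (inr b == inr b' :> vert (subdiv2 e1 e2)) = (b == b'). Proof. by []. Qed.

Lemma oldA v A e u : P v A == 0 -> D e ->
  (((endpts e).1 == u) || ((endpts e).2 == u)) && (v == u) -> c' e != A.
Proof. by move=> hP De /andP[He /eqP Hv]; rewrite -Hv in He; exact: miss_ne hP De He. Qed.
Lemma Aold v A e u : P v A == 0 -> D e ->
  (v == u) && (((endpts e).1 == u) || ((endpts e).2 == u)) -> A != c' e.
Proof. by move=> hP De /andP[Hv He]; rewrite eq_sym; apply: (@oldA v A e u hP De); rewrite He Hv. Qed.
Lemma hh (v v' u : vert G) (A A' : 'I_3) : (v == v' -> A != A') -> (v == u) && (v' == u) -> A != A'.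
Proof. by move=> H /andP[/eqP E /eqP E']; apply: H; rewrite E E'. Qed.
Lemma hh' (v v' u : vert G) (A A' : 'I_3) : (v' == v -> A' != A) -> (v == u) && (v' == u) -> A != A'.
Proof. by move=> H /andP[/eqP E /eqP E']; rewrite eq_sym; apply: H; rewrite E E'. Qed.
Lemma oo e f u : D e -> D f -> hE e != hE f ->
  (((endpts e).1 == u) || ((endpts e).2 == u)) && (((endpts f).1 == u) || ((endpts f).2 == u)) ->
  c' e != c' f.
Proof.
move=> De Df nef /andP[He Hf]; apply: (prD De Df _ He Hf).
by apply: contra nef => /eqP->.
Qed.

Section Build.
Variables A0 A1 A2 A3 Z : 'I_3.
Lemma col1f : colS A0 A1 A2 A3 Z (hE e1) = A0. Proof. by rewrite /= eqxx. Qed.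
Lemma col1t : colS A0 A1 A2 A3 Z h1t = A1. Proof. by rewrite /= eqxx. Qed.
Lemma col2f : colS A0 A1 A2 A3 Z (hE e2) = A2. Proof. by rewrite /= n21 eqxx. Qed.
Lemma col2t : colS A0 A1 A2 A3 Z h2t = A3. Proof. by rewrite /= n21 eqxx. Qed.
Lemma colM : colS A0 A1 A2 A3 Z (inr tt) = Z. Proof. by []. Qed.
Lemma colO e : D e -> colS A0 A1 A2 A3 Z (hE e) = c' e.
Proof. by rewrite /D !inE negb_or => /andP[n1 n2]; rewrite /= (negbTE n1) (negbTE n2). Qed.

Lemma build_sub : P p1 A0 == 0 -> P q1 A1 == 0 -> P p2 A2 == 0 -> P q2 A3 == 0 ->
  A0 != A1 -> A2 != A3 -> (p1 == p2 -> A0 != A2) -> (p1 == q2 -> A0 != A3) ->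
  (q1 == p2 -> A1 != A2) -> (q1 == q2 -> A1 != A3) ->
  Z != A0 -> Z != A1 -> Z != A2 -> Z != A3 -> colourable3 (subdiv2 e1 e2).
Proof.
move=> hA0 hA1 hA2 hA3 n01 n23 h02 h03 h12 h13 z0 z1 z2 z3.
exists (colS A0 A1 A2 A3 Z); split.
  move=> x; rewrite /is_loop; case: (kindP x) => [e De| | | | |];
    rewrite ?ends1f ?ends1t ?ends2f ?ends2t ?endsM ?endsO //=.
  by apply: contra (nlD De) => /eqP [->].
move=> x y; case: (kindP x) => [e De| | | | |]; case: (kindP y) => [f Df| | | | |];
  move=> nxy /existsP[w];
  rewrite ?ends1f ?ends1t ?ends2f ?ends2t ?endsM ?endsO ?col1f ?col1t ?col2f ?col2t ?colM ?colO //;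
  case: w => [u|[]] //=.
all: rewrite ?eqS_ll ?eqS_rl ?eqS_lr ?eqS_rr /= ?orbF ?andbF ?andbT //.
all: try by rewrite eqxx in nxy.
all: try by move=> _; rewrite eq_sym.
all: try by move=> _.
all: try by apply: oo.
all: try (by apply: (oldA hA0)); try (by apply: (oldA hA1)); try (by apply: (oldA hA2)); try (by apply: (oldA hA3)).
all: try (by apply: (Aold hA0)); try (by apply: (Aold hA1)); try (by apply: (Aold hA2)); try (by apply: (Aold hA3)).
all: try (by apply: hh); try (by apply: hh'); try (by apply: hh => _).
Qed.
End Build.

Definition colG (X Y : 'I_3) (e : edge G) : 'I_3 :=
  if e == e1 then X else if e == e2 then Y else c' e.

Variant kG : edge G -> Type := GOld e of D e : kG e | G1 : kG e1 | G2 : kG e2.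

Lemma kGP e : kG e.
Proof.
case: (e =P e1) => [->|n1]; first exact: G1.
case: (e =P e2) => [->|n2]; first exact: G2.
have De : D e by rewrite /D !inE negb_or; apply/andP; split; apply/eqP.
exact: GOld.
Qed.

Lemma oldX e X u v w : P v X == 0 -> P w X == 0 -> D e ->
  (((endpts e).1 == u) || ((endpts e).2 == u)) && ((v == u) || (w == u)) -> c' e != X.
Proof.
move=> hv hw De /andP[He /orP[] /eqP E]; rewrite -E in He.
  exact: miss_ne hv De He.
exact: miss_ne hw De He.
Qed.

Lemma build_G X Y : P p1 X == 0 -> P q1 X == 0 -> P p2 Y == 0 -> P q2 Y == 0 ->
  p1 != q1 -> p1 != p2 -> p1 != q2 -> q1 != p2 -> q1 != q2 -> p2 != q2 -> colourable3 G.
Proof.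
move=> hX1 hX2 hY1 hY2 d01 d02 d03 d12 d13 d23.
have cO e : D e -> colG X Y e = c' e.
  by rewrite /D !inE negb_or => /andP[n1 n2]; rewrite /colG (negbTE n1) (negbTE n2).
have c1 : colG X Y e1 = X by rewrite /colG eqxx.
have c2 : colG X Y e2 = Y by rewrite /colG n21 eqxx.
exists (colG X Y); split.
  by move=> e; rewrite /is_loop; case: (kGP e) => [e0 De| |] //; exact: nlD.
move=> x y; case: (kGP x) => [e De| |]; case: (kGP y) => [f Df| |];
  rewrite ?c1 ?c2 ?cO // => nxy /existsP[u] H.
- by move/andP: H => [He Hf]; exact: prD De Df nxy He Hf.
- exact: oldX hX1 hX2 De H.
- exact: oldX hY1 hY2 De H.
- by rewrite eq_sym; apply: (@oldX f X u p1 q1 hX1 hX2 Df); rewrite andbC.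
- by rewrite eqxx in nxy.
- exfalso; move: H d02 d03 d12 d13 => /andP[/orP[]/eqP-> /orP[]/eqP->]; rewrite eqxx //.
- by rewrite eq_sym; apply: (@oldX f Y u p2 q2 hY1 hY2 Df); rewrite andbC.
- exfalso; move: H d02 d03 d12 d13 => /andP[/orP[]/eqP-> /orP[]/eqP->]; rewrite eqxx //.
- by rewrite eqxx in nxy.
Qed.

Lemma zero_outside u i : u \notin [:: p1; q1; p2; q2] -> (P u i == 0) = false.
Proof.
move=> Hu.
have S0 : slots u = 0.
  rewrite /slots /inc (eq_sym p1 u) (eq_sym q1 u) (eq_sym p2 u) (eq_sym q2 u).
  by move: Hu; rewrite !inE; case: (u == p1); case: (u == q1); case: (u == p2); case: (u == q2).
move: (cardM u); rewrite S0 => /eqP; rewrite sum_nat_eq0 => /forallP/(_ i).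
by rewrite eqb0 => /negbTE.
Qed.

Lemma sum_list i : \sum_u (P u i == 0 : nat) =
  sumlast [:: p1; q1; p2; q2] (fun u => (P u i == 0 : nat)).
Proof.
rewrite -sum_sumlast; apply: eq_bigr => u _.
by case: (boolP (u \in _)) => Hu; rewrite ?mul1n // mul0n zero_outside.
Qed.

Definition Mof u : B3 := (P u (inord 0) == 0, P u (inord 1) == 0, P u (inord 2) == 0).

Lemma card3Mof u : card3 (Mof u) = slots u.
Proof. by rewrite -cardM sumI3. Qed.

Lemma mem3P u a : mem3 (Mof u) a -> (a < 3) && (P u (inord a) == 0).
Proof. by case: a => [|[|[|a]]]. Qed.

Lemma hM : hypsM (p1 == q1) (p1 == p2) (p1 == q2) (q1 == p2) (q1 == q2) (p2 == q2)
  (Mof p1) (Mof q1) (Mof p2) (Mof q2).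
Proof.
rewrite /hypsM; repeat (apply/andP; split).
all: try (by apply/implyP => /eqP ->; rewrite /eqB3 !eqxx).
all: try (rewrite card3Mof /slots /inc eqxx ?(eq_sym q1 p1) ?(eq_sym p2 p1) ?(eq_sym q2 p1)
   ?(eq_sym p2 q1) ?(eq_sym q2 q1) ?(eq_sym q2 p2); apply/eqP; lia).
all: try done.
all: rewrite /mem3 /Mof /=.
- have := parity (inord 0); rewrite sum_list /= !inE.
  move/negbTE => H; apply/negbT; rewrite -H; congr odd; rewrite -!mulnb; lia.
- have := parity (inord 1); rewrite sum_list /= !inE.
  move/negbTE => H; apply/negbT; rewrite -H; congr odd; rewrite -!mulnb; lia.
- have := parity (inord 2); rewrite sum_list /= !inE.
  move/negbTE => H; apply/negbT; rewrite -H; congr odd; rewrite -!mulnb; lia.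
Qed.

Lemma hard : ~ colourable3 G -> colourable3 (subdiv2 e1 e2).
Proof.
move=> nG.
case: (abs_lemma (hypsT_eq p1 q1 p2 q2) hM) => [[a0 [a1 [a2 [a3 [z H]]]]] | H].
  move: H; rewrite /conclA.
  move=> /and5P[m0 m1 m2 m3 /and5P[n01 n23 i02 i03 /and5P[i12 i13 zl z0 /and3P[z1 z2 z3]]]].
  move: (mem3P m0) (mem3P m1) (mem3P m2) (mem3P m3).
  move=> /andP[l0 h0] /andP[l1 h1] /andP[l2 h2] /andP[l3 h3].
  apply: (@build_sub (@inord 2 a0) (@inord 2 a1) (@inord 2 a2) (@inord 2 a3) (@inord 2 z) h0 h1 h2 h3);
    try (by apply: inord_neq);
    by move=> E; apply: inord_neq => //;
      first [exact: (implyP i02 E) | exact: (implyP i03 E) | exact: (implyP i12 E) | exact: (implyP i13 E)].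
move: H; rewrite /conclB.
move=> /and5P[d01 d02 d03 d12 /and4P[d13 d23 /hasP[x _ /andP[mx0 mx1]] /hasP[y _ /andP[my2 my3]]]].
move: (mem3P mx0) (mem3P mx1) (mem3P my2) (mem3P my3).
move=> /andP[_ h0] /andP[_ h1] /andP[_ h2] /andP[_ h3].
by case: nG; apply: (build_G h0 h1 h2 h3).
Qed.

End Sub.


Theorem proposition4 (G : mgraph) (e1 e2 : edge G) :
  snark G -> e1 != e2 ->
  (snark (subdiv2 e1 e2) <-> ~ colourable3 (delete2 e1 e2)).
Proof.
move=> [cn cu ncol] ne; split.
  move=> [_ _ nS] [c [nlc prc]]; apply: nS; exact: (hard ne cu nlc prc ncol).
move=> nD; split; [exact: connected_sub | exact: cubic_sub | ].
by move=> /col_sub_del.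
Qed.
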